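(* In the setting below, let $\varepsilon:U(N)\to k$ be the augmentation map. Then: (1) there is a $k$-algebra homomorphism $\Phi_w:U(N)((t_w;\delta_w))\to k((t_z))$, $\sum_i t_w^if_i\mapsto\sum_i t_z^i\varepsilon(f_i)$ ($f_i\in U(N)$); (2) there is a $k$-algebra homomorphism $\Phi_v:U(N)((t_w;\delta_w))((t_v;\delta_v))\to k((t_z))((t_y))$, $\sum_i t_v^ig_i\mapsto\sum_i t_y^i\Phi_w(g_i)$; (3) there is a $k$-algebra homomorphism $\Phi_u:U(N)((t_w;\delta_w))((t_v;\delta_v))((t_u;\delta_u))\to k((t_z))((t_y))((t_x;\delta_x))$, $\sum_it_u^ih_i\mapsto\sum_it_x^i\Phi_v(h_i)$.
   Context: Let $k$ be a field, $H=\langle x,y\mid[[y,x],x]=[[y,x],y]=0\rangle$ the Heisenberg Lie $k$-algebra, $z=[y,x]$; $L$ a Lie $k$-algebra generated by $u,v$ with a Lie homomorphism $\rho:L\to H$, $u\mapsto x$, $v\mapsto y$; $N=\ker\rho$, $w=[v,u]$. For an element $s$ of an algebra, $\delta_s(f)=fs-sf$. For a $k$-algebra $R$ with derivation $\delta$, $R((t;\delta))$ is the ring of Laurent series $\sum_{i\ge n}t^ia_i$ ($a_i\in R$) with $at^{-1}=t^{-1}a+\delta(a)$, i.e. $at=\sum_{i\ge1}t^i(-1)^{i-1}\delta^{i-1}(a)$; when $\delta=0$ we write $R((t))$. Here $\delta_w$ is the restriction to $U(N)$ of the inner derivation by $w$ in $U(L)$; $\delta_v$ is extended from $U(N)[w;\delta_w]$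 to $U(N)((t_w;\delta_w))$ by $\delta_v(t_w)=-t_w\delta_v(w)t_w$ and termwise on series; $\delta_u$ is extended similarly to $U(N)((t_w;\delta_w))((t_v;\delta_v))$ with $\delta_u(t_w)=-t_w\delta_u(w)t_w$, $\delta_u(t_v)=-t_v w t_v$. On the other side $\delta_x$ is the derivation of $k((t_z))((t_y))$ with $\delta_x(k)=0$, $\delta_x(t_z)=0$, $\delta_x(t_y)=-t_yzt_y$ (with $z=t_z^{-1}$), acting termwise on series. The augmentation $\varepsilon$ is the $k$-algebra homomorphism $U(N)\to k$ with $\varepsilon(N)=0$. *)

(* Defs.v *)
From HB Require Import structures.
From mathcomp Require Import all_boot all_order all_algebra.
From Stdlib Require Import ClassicalEpsilon.
Set Implicit Arguments. Unset Strict Implicit. Unset Printing Implicit Defensive.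
Import Order.TTheory GRing.Theory Num.Theory.
Local Open Scope ring_scope.

Definition is_lie (k : fieldType) (L : lmodType k) (br : L -> L -> L) : Prop :=
  [/\ (forall c a b d, br (c *: a + b) d = c *: br a d + br b d),
      (forall c a b d, br d (c *: a + b) = c *: br d a + br d b),
      (forall a, br a a = 0) &
      (forall a b d, br a (br b d) + br b (br d a) + br d (br a b) = 0)].

Definition lie_generated (k : fieldType) (L : lmodType k) (br : L -> L -> L)
  (u v : L) : Prop :=
  forall P : L -> Prop, P u -> P v ->
    (forall a b, P a -> P b -> P (a + b)) ->
    (forall c a, P a -> P (c *: a)) ->
    (forall a b, P a -> P b -> P (br a b)) -> forall a, P a.

(* The Heisenberg Lie algebra H, realised on k^3 with basis
   x = (1,0,0), y = (0,1,0), z = (0,0,1) = [y,x], z central. *)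
Definition heis (k : fieldType) := (k * k * k)%type.
Definition hadd (k : fieldType) (p q : heis k) : heis k :=
  (p.1.1 + q.1.1, p.1.2 + q.1.2, p.2 + q.2).
Definition hscale (k : fieldType) (c : k) (p : heis k) : heis k :=
  (c * p.1.1, c * p.1.2, c * p.2).
Definition hbr (k : fieldType) (p q : heis k) : heis k :=
  (0, 0, p.1.2 * q.1.1 - p.1.1 * q.1.2).
Definition hx (k : fieldType) : heis k := (1, 0, 0).
Definition hy (k : fieldType) : heis k := (0, 1, 0).
Definition hzero (k : fieldType) : heis k := (0, 0, 0).

Definition is_lie_hom (k : fieldType) (L : lmodType k) (br : L -> L -> L)
  (rho : L -> heis k) : Prop :=
  (forall c a b, rho (c *: a + b) = hadd (hscale c (rho a)) (rho b)) /\
  (forall a b, rho (br a b) = hbr (rho a) (rho b)).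

Record aops (k : fieldType) := AOps {
  acar :> Type;
  a0 : acar; a1 : acar;
  aadd : acar -> acar -> acar;
  aopp : acar -> acar;
  amul : acar -> acar -> acar;
  ascl : k -> acar -> acar }.

Definition aops_of_alg (k : fieldType) (A : algType k) : aops k :=
  @AOps k A 0 1 +%R -%R *%R *:%R.
Definition kops (k : fieldType) : aops k :=
  @AOps k k 0 1 +%R -%R *%R *%R.

Definition is_ahom (k : fieldType) (A B : aops k) (f : A -> B) : Prop :=
  [/\ (forall a b, f (aadd a b) = aadd (f a) (f b)),
      (forall a b, f (amul a b) = amul (f a) (f b)),
      f (a1 A) = a1 B &
      (forall c a, f (ascl c a) = ascl c (f a))].

Definition is_der (k : fieldType) (A : algType k) (D : A -> A) : Prop :=
  [/\ (forall a b, D (a + b) = D a + D b),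
      (forall c a, D (c *: a) = c *: D a) &
      (forall a b, D (a * b) = D a * b + a * D b)].

(* Universal enveloping algebra of the Lie subalgebra N = {a | inN a} of
   L: iota : L -> U (only its values on N matter) is a Lie map on N, and
   (U, iota) is universal among Lie maps from N into k-algebras. *)
Definition lie_map_on (k : fieldType) (L : lmodType k) (br : L -> L -> L)
  (inN : L -> Prop) (B : algType k) (f : L -> B) : Prop :=
  (forall c a b, inN a -> inN b -> f (c *: a + b) = c *: f a + f b) /\
  (forall a b, inN a -> inN b -> f (br a b) = f a * f b - f b * f a).

Definition is_env_alg (k : fieldType) (L : lmodType k) (br : L -> L -> L)
  (inN : L -> Prop) (U : algType k) (iota : L -> U) : Prop :=
  lie_map_on br inN iota /\
  forall (B : algType k) (f : L -> B), lie_map_on br inN f ->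
    exists g : U -> B,
      [/\ is_ahom (A := aops_of_alg U) (B := aops_of_alg B) g,
          (forall a, inN a -> g (iota a) = f a) &
          (forall g' : U -> B,
             is_ahom (A := aops_of_alg U) (B := aops_of_alg B) g' ->
             (forall a, inN a -> g' (iota a) = f a) -> forall x, g' x = g x)].

(* Skew Laurent series  A((t; d)) = { sum_{i >= n} t^i a_i }.           *)
Definition lser (k : fieldType) (A : aops k) : Type :=
  {f : int -> A | exists lo : int, forall n : int, n < lo -> f n = a0 A}.

Definition coef (k : fieldType) (A : aops k) (s : lser A) : int -> A :=
  proj1_sig s.

Definition lob (k : fieldType) (A : aops k) (s : lser A) : int :=
  proj1_sig (constructive_indefinite_description _ (proj2_sig s)).

Lemma mk_ser_proof (k : fieldType) (A : aops k) (L : int) (g : int -> A) :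
  exists lo : int, forall n : int, n < lo ->
    (fun n => if n < L then a0 A else g n) n = a0 A.
Proof. by exists L => n /= ->. Qed.

Definition mk_ser (k : fieldType) (A : aops k) (L : int) (g : int -> A)
  : lser A := exist _ _ (mk_ser_proof L g).

Definition asum (k : fieldType) (A : aops k) (I : Type) (r : seq I)
  (F : I -> A) : A := foldr (fun i acc => aadd (F i) acc) (a0 A) r.

Definition irange (lo hi : int) : seq int :=
  if lo <= hi then [seq lo + (i%:Z) | i <- iota 0 (absz (hi - lo)%R).+1]
  else [::].

(* generalised binomial coefficient binom(z, m) for z : int *)
Definition gbin (z : int) (m : nat) : int :=
  match z with
  | Posz n => ('C(n, m))%:Z
  | Negz n => (-1) ^+ m * ('C(n + m, m))%:Z   (* z = -(n+1) *)
  end.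

Section Laurent.
Variables (k : fieldType) (A : aops k) (d : A -> A).

Definition ser_zero : lser A := mk_ser 0 (fun _ => a0 A).
Definition ser_mono (i : int) (a : A) : lser A :=
  mk_ser i (fun n => if n == i then a else a0 A).
Definition ser_const (a : A) : lser A := ser_mono 0 a.
Definition ser_one : lser A := ser_const (a1 A).
Definition ser_add (s r : lser A) : lser A :=
  mk_ser (if lob s < lob r then lob s else lob r)
         (fun n => aadd (coef s n) (coef r n)).
Definition ser_opp (s : lser A) : lser A :=
  mk_ser (lob s) (fun n => aopp (coef s n)).
Definition ser_scl (c : k) (s : lser A) : lser A :=
  mk_ser (lob s) (fun n => ascl c (coef s n)).
(* (t^i a)(t^j b) = sum_m binom(-j,m) t^(i+j+m) d^m(a) b,
   from a t^(-1) = t^(-1) a + d(a). *)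
Definition ser_mul (s r : lser A) : lser A :=
  mk_ser (lob s + lob r) (fun n =>
    asum (irange (lob s) (n - lob r)) (fun i =>
      asum (irange (lob r) (n - i)) (fun j =>
        ascl ((gbin (- j) (absz (n - i - j)%R))%:~R)
             (amul (iter (absz (n - i - j)%R) d (coef s i)) (coef r j))))).

Definition laurent : aops k :=
  @AOps k (lser A) ser_zero ser_one ser_add ser_opp ser_mul ser_scl.

Definition tpow (i : int) : laurent := ser_mono i (a1 A).

(* Extension to A((t; d)) of a derivation D of A, determined by
   D(t) = - t c t (where c = D(t^(-1))), Leibniz on powers of t and
   acting termwise on series: D(sum t^i f_i) = sum (D(t^i) f_i + t^i D(f_i)). *)
Variables (D : A -> A) (c : A).
Definition Dt1 : laurent :=
  aopp (amul (tpow 1) (amul (ser_const c : laurent) (tpow 1))).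
Definition Dpow (i : int) : laurent :=
  match i with
  | Posz n => asum (iota 0 n) (fun a =>
                amul (tpow a%:Z) (amul Dt1 (tpow (n.-1 - a)%N%:Z)))
  | Negz n => asum (iota 0 n.+1) (fun a =>   (* i = -(n+1), t^(-1) = w *)
                amul (tpow (- a%:Z))
                  (amul (ser_const c : laurent) (tpow (- (n - a)%N%:Z))))
  end.
Definition ext_der (f : laurent) : laurent :=
  mk_ser (lob f) (fun n =>
    aadd (asum (irange (lob f) n) (fun i =>
            coef (amul (Dpow i) (ser_const (coef f i) : laurent) : lser A) n))
         (D (coef f n))).
End Laurent.

Definition zero_der (k : fieldType) (A : aops k) : A -> A := fun _ => a0 A.
Arguments ext_der {k A} d D c f.
Arguments laurent {k A} d.
Arguments zero_der {k} A _.

(* Main.v *)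
Require Import Defs.
From HB Require Import structures.
From mathcomp Require Import all_boot all_order all_algebra zify.
From Stdlib Require Import ClassicalEpsilon FunctionalExtensionality ProofIrrelevance.
Import Order.TTheory GRing.Theory Num.Theory.
Set Implicit Arguments. Unset Strict Implicit. Unset Printing Implicit Defensive.
Local Open Scope ring_scope.

Lemma sorted_irange lo hi : sorted <%O (irange lo hi).
Proof.
rewrite /irange; case: ifP => // _.
rewrite sorted_map; apply: (sub_sorted _ (iota_ltn_sorted _ _)).
move=> i j /=; lia.
Qed.

Lemma mem_irange lo hi i : (i \in irange lo hi) = (lo <= i <= hi).
Proof.
rewrite /irange; case: ifP => H.
  apply/mapP/idP.
    move=> [j]; rewrite mem_iota => /andP [_ hj] ->.
    apply/andP; split; lia.
  move=> /andP [h1 h2]; exists (absz (i - lo)); last by lia.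
  rewrite mem_iota; apply/andP; split; lia.
rewrite in_nil; apply/esym/negbTE/negP => /andP [h1 h2].
move/negbT: H; lia.
Qed.

Lemma irange_filter_lo lo L hi : lo <= L ->
  filter (fun i => L <= i) (irange lo hi) = irange L hi.
Proof.
move=> H; apply: lt_sorted_eq.
- apply: sorted_filter; [exact: lt_trans | exact: sorted_irange].
- exact: sorted_irange.
move=> i; rewrite mem_filter !mem_irange.
apply/idP/idP => /andP []; lia.
Qed.

Lemma irange_filter_hi lo H hi : H <= hi ->
  filter (fun i => i <= H) (irange lo hi) = irange lo H.
Proof.
move=> h; apply: lt_sorted_eq.
- apply: sorted_filter; [exact: lt_trans | exact: sorted_irange].
- exact: sorted_irange.
move=> i; rewrite mem_filter !mem_irange.
apply/idP/idP => /andP []; lia.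
Qed.

Lemma irange_nil lo hi : hi < lo -> irange lo hi = [::].
Proof. by rewrite /irange => h; rewrite leNgt h. Qed.
Section Ser.
Variables (k : fieldType) (B : aops k).

Lemma ser_ext (s r : lser B) : (forall n, coef s n = coef r n) -> s = r.
Proof.
case: s => f Hf; case: r => g Hg /= H.
have efg : f = g by apply: functional_extensionality.
subst g; by rewrite (proof_irrelevance _ Hf Hg).
Qed.

Lemma lobP (s : lser B) n : n < lob s -> coef s n = a0 B.
Proof. rewrite /lob; case: constructive_indefinite_description => lo H /=; exact: H. Qed.

Lemma coef_mk L g n : coef (mk_ser (A:=B) L g) n = if n < L then a0 B else g n.
Proof. by []. Qed.

Definition valid (s : lser B) lo := forall i, i < lo -> coef s i = a0 B.

Lemma valid_lob (s : lser B) : valid s (lob s).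
Proof. move=> i; exact: lobP. Qed.

Lemma asum_eq (I : Type) (l : seq I) (F G : I -> B) :
  (forall i, F i = G i) -> asum l F = asum l G.
Proof. by move=> H; elim: l => //= i l ->; rewrite H. Qed.

Definition good := [/\ forall x, aadd (a0 B) x = x, forall x, amul (a0 B) x = a0 B,
  forall x, amul x (a0 B) = a0 B, forall c, ascl c (a0 B) = a0 B & aopp (a0 B) = a0 B].

Hypothesis gB : good.

Lemma add0x x : aadd (a0 B) x = x. Proof. by case: gB. Qed.
Lemma mul0x x : amul (a0 B) x = a0 B. Proof. by case: gB. Qed.
Lemma mulx0 x : amul x (a0 B) = a0 B. Proof. by case: gB. Qed.
Lemma scl0 c : ascl c (a0 B) = a0 B. Proof. by case: gB. Qed.
Lemma opp0 : aopp (a0 B) = a0 B. Proof. by case: gB. Qed.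

Lemma asum_filter (I : Type) (P : pred I) (l : seq I) (F : I -> B) :
  (forall i, ~~ P i -> F i = a0 B) -> asum (filter P l) F = asum l F.
Proof.
move=> H; elim: l => //= i l IH; case: ifP => Pi /=; rewrite IH //.
by rewrite H ?Pi // add0x.
Qed.

Lemma asum_zero (I : Type) (l : seq I) (F : I -> B) :
  (forall i, F i = a0 B) -> asum l F = a0 B.
Proof. by move=> H; elim: l => //= i l ->; rewrite H add0x. Qed.

Lemma coef_zero n : coef (ser_zero B) n = a0 B.
Proof. by rewrite coef_mk; case: ifP. Qed.

Lemma coef_add (s r : lser B) n : coef (ser_add s r) n = aadd (coef s n) (coef r n).
Proof.
rewrite coef_mk; case: ifP => // h.
have h1 : n < lob s by move: h; case: ifP; lia.
have h2 : n < lob r by move: h; case: ifP; lia.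
by rewrite !lobP // add0x.
Qed.

Lemma coef_scl c (s : lser B) n : coef (ser_scl c s) n = ascl c (coef s n).
Proof. by rewrite coef_mk; case: ifP => // h; rewrite lobP // scl0. Qed.

Lemma coef_opp (s : lser B) n : coef (ser_opp s) n = aopp (coef s n).
Proof. by rewrite coef_mk; case: ifP => // h; rewrite lobP // opp0. Qed.

Lemma coef_mono i (a : B) n : coef (ser_mono i a) n = if n == i then a else a0 B.
Proof. rewrite coef_mk; case: ifP => // h; case: eqP => // e; move: h; lia. Qed.

Lemma coef_asum (I : Type) (l : seq I) (F : I -> lser B) n :
  coef (A:=B) (asum (A := laurent (fun x : B => x)) l F) n = asum l (fun i => coef (F i) n).
Proof. elim: l => [|i l IH] ; first exact: coef_zero. by rewrite [RHS]/= -IH; exact: coef_add. Qed.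

Variable d : B -> B.
Hypothesis d0 : d (a0 B) = a0 B.

Lemma iter_d0 m : iter m d (a0 B) = a0 B.
Proof. by elim: m => //= m ->. Qed.

Definition term (s r : lser B) n i j :=
  ascl ((gbin (- j) (absz (n - i - j)%R))%:~R)
       (amul (iter (absz (n - i - j)%R) d (coef s i)) (coef r j)).

Definition Ssum s r lo1 lo2 n :=
  asum (irange lo1 (n - lo2)) (fun i => asum (irange lo2 (n - i)) (fun j => term s r n i j)).

Lemma coef_mul_raw (s r : lser B) n : coef (ser_mul d s r) n =
  if n < lob s + lob r then a0 B else Ssum s r (lob s) (lob r) n.
Proof. by []. Qed.

Lemma Ssum_shrink (s r : lser B) lo1 lo2 L1 L2 n : lo1 <= L1 -> lo2 <= L2 ->
  valid s L1 -> valid r L2 -> Ssum s r lo1 lo2 n = Ssum s r L1 L2 n.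
Proof.
move=> h1 h2 v1 v2; rewrite /Ssum.
have -> : (fun i => asum (irange lo2 (n - i)) (fun j => term s r n i j)) =
   (fun i => asum (irange L2 (n - i)) (fun j => term s r n i j)).
  apply: functional_extensionality => i; rewrite -(irange_filter_lo _ h2) asum_filter // => j.
  rewrite -ltNge => hj; by rewrite /term (v2 _ hj) mulx0 scl0.
rewrite -(irange_filter_lo _ h1) asum_filter; last first.
  move=> i; rewrite -ltNge => hi; apply: asum_zero => j.
  by rewrite /term (v1 _ hi) iter_d0 mul0x scl0.
have h3 : n - L2 <= n - lo2 by lia.
rewrite -(irange_filter_hi _ h3) asum_filter // => i.
rewrite -ltNge => hi; rewrite irange_nil //; lia.
Qed.

Lemma coef_mul (s r : lser B) n lo1 lo2 : valid s lo1 -> valid r lo2 ->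
  coef (ser_mul d s r) n = Ssum s r lo1 lo2 n.
Proof.
move=> v1 v2.
have -> : coef (ser_mul d s r) n = Ssum s r (lob s) (lob r) n.
  rewrite coef_mul_raw; case: ifP => // h.
  by rewrite /Ssum irange_nil //; lia.
have vm1 : valid s (Order.max lo1 (lob s)).
  move=> i; rewrite lt_max => /orP [] ?; [exact: v1| exact: lobP].
have vm2 : valid r (Order.max lo2 (lob r)).
  move=> i; rewrite lt_max => /orP [] ?; [exact: v2| exact: lobP].
rewrite (@Ssum_shrink _ _ (lob s) (lob r) _ _ _ _ _ vm1 vm2) ?le_max ?lexx ?orbT //.
by rewrite (@Ssum_shrink _ _ lo1 lo2 _ _ _ _ _ vm1 vm2) ?le_max ?lexx.
Qed.

End Ser.
Section Laws.
Variables (k : fieldType) (A : aops k) (d : A -> A).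
Lemma L_add : @aadd k (laurent d) = @ser_add k A. Proof. by []. Qed.
Lemma L_mul : @amul k (laurent d) = ser_mul d. Proof. by []. Qed.
Lemma L_zero : a0 (laurent d) = ser_zero A. Proof. by []. Qed.
Lemma L_one : a1 (laurent d) = ser_one A. Proof. by []. Qed.
Lemma L_scl : @ascl k (laurent d) = @ser_scl k A. Proof. by []. Qed.
Lemma L_opp : @aopp k (laurent d) = @ser_opp k A. Proof. by []. Qed.
End Laws.

Section Good.
Variables (k : fieldType) (B : aops k) (gB : good B) (d : B -> B) (d0 : d (a0 B) = a0 B).

Lemma mul_zero_r (s r : lser B) n : (forall j, coef r j = a0 B) ->
  coef (ser_mul d s r) n = a0 B.
Proof.
move=> H; rewrite (coef_mul gB d0 n (@valid_lob _ _ s) (@valid_lob _ _ r)) /Ssum.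
apply: asum_zero => // i; apply: asum_zero => // j.
by rewrite /term H (mulx0 gB) (scl0 gB).
Qed.

Lemma mul_zero_l (s r : lser B) n : (forall j, coef s j = a0 B) ->
  coef (ser_mul d s r) n = a0 B.
Proof.
move=> H; rewrite (coef_mul gB d0 n (@valid_lob _ _ s) (@valid_lob _ _ r)) /Ssum.
apply: asum_zero => // i; apply: asum_zero => // j.
by rewrite /term H (iter_d0 d0) (mul0x gB) (scl0 gB).
Qed.

Lemma goodL : good (laurent d).
Proof.
split.
- move=> x; rewrite L_add L_zero; apply: ser_ext => n.
  by rewrite (coef_add gB) coef_zero (add0x gB).
- move=> x; rewrite L_mul L_zero; apply: ser_ext => n.
  by rewrite coef_zero mul_zero_l // => j; rewrite coef_zero.
- move=> x; rewrite L_mul L_zero; apply: ser_ext => n.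
  by rewrite coef_zero mul_zero_r // => j; rewrite coef_zero.
- move=> c; rewrite L_scl L_zero; apply: ser_ext => n.
  by rewrite (coef_scl gB) coef_zero (scl0 gB).
- rewrite L_opp L_zero; apply: ser_ext => n.
  by rewrite (coef_opp gB) coef_zero (opp0 gB).
Qed.
End Good.

Section Map.
Variables (k : fieldType) (A B : aops k) (f : A -> B).

Definition homp := [/\ f (a0 A) = a0 B, forall a b, f (aadd a b) = aadd (f a) (f b),
  forall a b, f (amul a b) = amul (f a) (f b),
  f (a1 A) = a1 B & (forall c a, f (ascl c a) = ascl c (f a)) /\ (forall a, f (aopp a) = aopp (f a))].

Definition map_ser (s : lser A) : lser B := mk_ser (lob s) (fun n => f (coef s n)).

Hypothesis f0 : f (a0 A) = a0 B.

Lemma coef_map s n : coef (map_ser s) n = f (coef s n).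
Proof. by rewrite coef_mk; case: ifP => // h; rewrite lobP. Qed.

Lemma valid_map s lo : valid s lo -> valid (map_ser s) lo.
Proof. by move=> v i h; rewrite coef_map v. Qed.

Lemma map_mono i a : map_ser (ser_mono i a) = ser_mono i (f a).
Proof. apply: ser_ext => n; rewrite coef_map !coef_mono; by case: eqP. Qed.

Lemma homp_asum (I : Type) (l : seq I) (F : I -> A) :
  homp -> f (asum l F) = asum l (fun i => f (F i)).
Proof. by case=> h0 hadd _ _ _; elim: l => //= i l <-; rewrite hadd. Qed.

Lemma homp_iter (dA : A -> A) (dB : B -> B) :
  (forall a, f (dA a) = dB (f a)) -> forall m a, f (iter m dA a) = iter m dB (f a).
Proof. by move=> H; elim=> //= m IH a; rewrite H IH. Qed.

End Map.

Section Map2.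
Variables (k : fieldType) (A B : aops k) (f : A -> B).
Variables (gB : good B) (dA : A -> A) (dB : B -> B) (dB0 : dB (a0 B) = a0 B).
Hypotheses (hf : homp f) (hd : forall a, f (dA a) = dB (f a)).

Lemma map_hom : @homp k (laurent dA) (laurent dB) (map_ser f).
Proof.
case: hf => h0 hadd hmul h1 [hscl hopp].
split; last split.
- rewrite !L_zero; apply: ser_ext => n; by rewrite (coef_map h0) !coef_zero.
- move=> s r; rewrite !L_add; apply: ser_ext => n.
  rewrite (coef_map h0) (coef_add gB) !(coef_map h0) coef_mk; case: ifP => h; last by rewrite hadd.
  have h1' : n < lob s by move: h; case: ifP; lia.
  have h2' : n < lob r by move: h; case: ifP; lia.
  by rewrite !lobP // h0 (add0x gB).
- move=> s r; rewrite !L_mul; apply: ser_ext => n.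
  rewrite (coef_map h0) (coef_mul gB dB0 n (valid_map h0 (@valid_lob _ _ s)) (valid_map h0 (@valid_lob _ _ r))).
  rewrite coef_mul_raw; case: ifP => h.
    by rewrite h0 /Ssum irange_nil //; lia.
  rewrite /Ssum (homp_asum _ _ hf); apply: asum_eq => i.
  rewrite (homp_asum _ _ hf); apply: asum_eq => j.
  by rewrite /term hscl hmul (homp_iter hd) !(coef_map h0).
- by rewrite !L_one /ser_one /ser_const (map_mono h0) h1.
- move=> c s; rewrite !L_scl; apply: ser_ext => n.
  rewrite (coef_map h0) (coef_scl gB) (coef_map h0) coef_mk; case: ifP => h; last by rewrite hscl.
  by rewrite lobP // h0 (scl0 gB).
- move=> s; rewrite !L_opp; apply: ser_ext => n.
  rewrite (coef_map h0) (coef_opp gB) (coef_map h0) coef_mk; case: ifP => h; last by rewrite hopp.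
  by rewrite lobP // h0 (opp0 gB).
Qed.
End Map2.
Section Ext.
Variables (k : fieldType) (B : aops k) (gB : good B) (dB : B -> B) (dB0 : dB (a0 B) = a0 B).
Variables (D' : B -> B) (D'0 : D' (a0 B) = a0 B) (c' : B).

Definition Eext (t : lser B) n lo :=
  if n < lo then a0 B else
  aadd (asum (irange lo n) (fun i =>
          coef (amul (Dpow dB c' i) (ser_const (coef t i) : laurent dB) : lser B) n))
       (D' (coef t n)).

Lemma coef_ext_der t n : coef (ext_der dB D' c' t) n = Eext t n (lob t).
Proof. by []. Qed.

Lemma coef_const_zero j : coef (ser_const (a0 B)) j = a0 B.
Proof. by rewrite /ser_const coef_mono; case: eqP. Qed.

Lemma Eext_shrink t n lo L : lo <= L -> valid t L -> Eext t n lo = Eext t n L.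
Proof.
move=> hl v; rewrite /Eext.
have tz : forall i, ~~ (L <= i) ->
    coef (amul (Dpow dB c' i) (ser_const (coef t i) : laurent dB) : lser B) n = a0 B.
  move=> i; rewrite -ltNge => hi; rewrite L_mul (mul_zero_r gB dB0) // => j.
  by rewrite v // coef_const_zero.
case: ifP => h1; case: ifP => h2 //.
- by move: h1 h2; lia.
- rewrite -(asum_filter gB _ tz) (irange_filter_lo n hl) irange_nil ?h2 //=.
  by rewrite v // D'0 (add0x gB).
- by rewrite -(asum_filter gB _ tz) (irange_filter_lo n hl).
Qed.

Lemma Eext_indep t n lo lo' : valid t lo -> valid t lo' -> Eext t n lo = Eext t n lo'.
Proof.
move=> v v'.
have vm : valid t (Order.max lo lo').
  move=> i; rewrite lt_max => /orP [] ?; [exact: v| exact: v'].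
by rewrite (Eext_shrink _ _ vm) ?le_max ?lexx // (Eext_shrink _ _ vm) ?le_max ?lexx ?orbT.
Qed.
End Ext.

Section Ext2.
Variables (k : fieldType) (A B : aops k) (f : A -> B).
Variables (gB : good B) (dA : A -> A) (dB : B -> B) (dB0 : dB (a0 B) = a0 B).
Hypotheses (hf : homp f) (hd : forall a, f (dA a) = dB (f a)).

Let hF := map_hom gB dB0 hf hd.
Let h0 : f (a0 A) = a0 B. Proof. by case: hf. Qed.

Lemma map_tpow i : map_ser f (tpow dA i) = tpow dB i.
Proof. by rewrite /tpow (map_mono h0); case: hf => _ _ _ ->. Qed.

Lemma map_const a : map_ser f (ser_const a) = ser_const (f a).
Proof. by rewrite /ser_const (map_mono h0). Qed.

Lemma map_Dt1 c : map_ser f (Dt1 dA c) = Dt1 dB (f c).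
Proof.
case: hF => _ _ hmul _ [_ hopp].
by rewrite /Dt1 hopp !hmul !map_tpow map_const.
Qed.

Lemma map_Dpow c i : map_ser f (Dpow dA c i) = Dpow dB (f c) i.
Proof.
case: hF => _ _ hmul _ _.
case: i => n.
- rewrite /Dpow (homp_asum _ _ hF); apply: (@asum_eq _ (laurent dB)) => a.
  by rewrite !hmul !map_tpow map_Dt1.
- rewrite /Dpow (homp_asum _ _ hF); apply: (@asum_eq _ (laurent dB)) => a.
  by rewrite !hmul !map_tpow map_const.
Qed.

Variables (D : A -> A) (D' : B -> B) (D'0 : D' (a0 B) = a0 B).
Hypothesis hD : forall a, f (D a) = D' (f a).

Lemma map_ext_der c s :
  map_ser f (ext_der dA D c s) = ext_der dB D' (f c) (map_ser f s).
Proof.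
case: hf => _ hadd _ _ _.
case: hF => _ _ hmul _ _.
apply: ser_ext => n.
rewrite (coef_map h0) !coef_ext_der.
rewrite -(Eext_indep gB dB0 D'0 (f c) n (valid_map h0 (@valid_lob _ _ s)) (@valid_lob _ _ _)).
rewrite /Eext; case: ifP => h //.
rewrite hadd (homp_asum _ _ hf) hD (coef_map h0); congr aadd; apply: asum_eq => i.
by rewrite -(coef_map h0) hmul map_Dpow map_const (coef_map h0).
Qed.
End Ext2.
Section Triv.
Variables (k : fieldType) (B : aops k) (gB : good B) (d : B -> B) (d0 : d (a0 B) = a0 B).

Lemma coef_asumd (I : Type) (l : seq I) (F : I -> lser B) n :
  coef (A:=B) (asum (A := laurent d) l F) n = asum l (fun i => coef (F i) n).
Proof. exact: (coef_asum gB). Qed.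

Lemma Dt1_zero n : coef (Dt1 d (a0 B)) n = a0 B.
Proof.
rewrite /Dt1 L_opp (coef_opp gB) L_mul (mul_zero_r gB d0) ?(opp0 gB) // => j.
by rewrite (mul_zero_l gB d0) // => m; rewrite coef_const_zero.
Qed.

Lemma Dpow_zero i n : coef (Dpow d (a0 B) i) n = a0 B.
Proof.
case: i => m; rewrite /Dpow coef_asumd; apply: (asum_zero gB) => a.
- rewrite L_mul (mul_zero_r gB d0) // => j.
  by rewrite (mul_zero_l gB d0) // => j'; rewrite Dt1_zero.
- rewrite L_mul (mul_zero_r gB d0) // => j.
  by rewrite (mul_zero_l gB d0) // => j'; rewrite coef_const_zero.
Qed.

Lemma ext_der_triv (D : B -> B) t : (forall a, D a = a0 B) ->
  ext_der d D (a0 B) t = ser_zero B.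
Proof.
move=> hD; apply: ser_ext => n; rewrite coef_ext_der coef_zero /Eext.
case: ifP => // _; rewrite hD (asum_zero gB) ?(add0x gB) // => i.
by rewrite L_mul (mul_zero_l gB d0) // => j; rewrite Dpow_zero.
Qed.

Lemma ext_der_zero (D : B -> B) c : D (a0 B) = a0 B ->
  ext_der d D c (ser_zero B) = ser_zero B.
Proof.
move=> hD; apply: ser_ext => n; rewrite coef_ext_der coef_zero /Eext.
case: ifP => // _; rewrite coef_zero hD (asum_zero gB) ?(add0x gB) // => i.
by rewrite L_mul (mul_zero_r gB d0) // => j; rewrite coef_zero coef_const_zero.
Qed.
End Triv.
Lemma add_sub_hom (V W : zmodType) (g : V -> W) :
  (forall a b, g (a + b) = g a + g b) -> forall a b, g (a - b) = g a - g b.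
Proof. by move=> H a b; apply: (@addIr _ (g b)); rewrite -H !subrK. Qed.

Lemma add_zero_hom (V W : zmodType) (g : V -> W) :
  (forall a b, g (a + b) = g a + g b) -> g 0 = 0.
Proof. by move=> H; have := add_sub_hom H 0 0; rewrite !subrr. Qed.

Section Dual.
Variables (k : fieldType) (U : algType k) (eps : U -> k).
Hypothesis heps : is_ahom (A := aops_of_alg U) (B := kops k) eps.

Let E : 'M[k]_2 := delta_mx 0 1.
Definition phiD (D : U -> U) (x : U) : 'M[k]_2 := eps x *: 1 + eps (D x) *: E.

Lemma EE : E * E = 0.
Proof. by rewrite /E -mulmxE mul_delta_mx_cond. Qed.

Lemma phiD_hom D : is_der D -> is_ahom (A := aops_of_alg U) (B := aops_of_alg 'M[k]_2) (phiD D).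
Proof.
case: heps => eadd emul e1 escl; case=> dadd dscl dmul.
have e0 : eps 0 = 0 := add_zero_hom eadd.
have D1 : D 1 = 0.
  have := dmul 1 1; rewrite !mul1r mulr1 => h.
  by apply: (@addrI _ (D 1)); rewrite addr0 -h.
split => /=.
- move=> a b; rewrite /phiD eadd dadd eadd !scalerDl.
  by rewrite addrACA.
- move=> a b; rewrite /phiD emul dmul eadd !emul /=.
  rewrite mulrDl !mulrDr -!scalerAl -!scalerAr !mul1r !mulr1 EE !scaler0 addr0.
  rewrite !scalerA scalerDl addrA; by rewrite -!addrA [X in _ + X]addrC.
- by rewrite /phiD D1 e1 e0 scale1r scale0r addr0.
- by move=> c a; rewrite /phiD escl dscl escl /= scalerDr !scalerA.
Qed.

Lemma zero_der_is : is_der (fun _ : U => 0).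
Proof. by split => *; rewrite ?addr0 ?scaler0 ?mulr0 ?mul0r ?addr0. Qed.

Lemma phiD_zero x : phiD (fun _ => 0) x = eps x *: 1.
Proof. case: heps => eadd _ _ _; by rewrite /phiD (add_zero_hom eadd) scale0r addr0. Qed.

Lemma phiD_coef D x : (phiD D x - phiD (fun _ => 0) x) 0 1 = eps (D x).
Proof.
case: heps => eadd _ _ _.
rewrite /phiD (add_zero_hom eadd) scale0r addr0 addrC addKr mxE /E mxE.
by rewrite !eqxx mulr1.
Qed.
End Dual.

Lemma eps_der_zero (k : fieldType) (L : lmodType k) (brL : L -> L -> L)
  (inN : L -> Prop) (UN : algType k) (iotaN : L -> UN)
  (hUN : is_env_alg brL inN iotaN)
  (eps : UN -> k) (heps : is_ahom (A := aops_of_alg UN) (B := kops k) eps)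
  (D : UN -> UN) (hD : is_der D) (hD0 : forall a, inN a -> eps (D (iotaN a)) = 0) :
  forall x, eps (D x) = 0.
Proof.
case: hUN => [[hl1 hl2] univ].
have hom1 := phiD_hom heps hD.
have hom0 := phiD_hom heps (@zero_der_is _ UN).
have subh : forall (g : UN -> 'M[k]_2), is_ahom (A := aops_of_alg UN) (B := aops_of_alg 'M[k]_2) g ->
    forall a b, g (a - b) = g a - g b.
  move=> g [ga _ _ _]; exact: add_sub_hom.
have lm : lie_map_on brL inN (fun a => phiD eps D (iotaN a)).
  split.
  - move=> c a b ha hb; rewrite hl1 //.
    case: hom1 => ga _ _ gs; by rewrite /= ga gs.
  - move=> a b ha hb; rewrite hl2 // (subh _ hom1).
    by case: hom1 => _ gm _ _; rewrite /= !gm.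
have [g [hg hgi huniq]] := univ _ _ lm.
move=> x.
have e1 := huniq _ hom1 (fun a _ => erefl).
have e0 : forall y, phiD eps (fun _ => 0) y = g y.
  apply: huniq => // a ha.
  case: heps => eadd _ _ _.
  by rewrite /phiD hD0 // (add_zero_hom eadd) scale0r.
by rewrite -(phiD_coef heps D x) e1 e0 subrr mxE.
Qed.
Lemma good_kops (k : fieldType) : good (kops k).
Proof. by split => * /=; rewrite ?add0r ?mul0r ?mulr0 ?oppr0. Qed.

Lemma homp_eps (k : fieldType) (UN : algType k) (eps : UN -> k)
  (heps : is_ahom (A := aops_of_alg UN) (B := kops k) eps) :
  homp (A := aops_of_alg UN) (B := kops k) eps.
Proof.
case: heps => eadd emul e1 escl.
have e0 := add_zero_hom eadd.
split => //; split => // a /=.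
by rewrite -sub0r (add_sub_hom eadd) e0 sub0r.
Qed.

Lemma ahom_of_homp (k : fieldType) (A B : aops k) (f : A -> B) : homp f -> is_ahom f.
Proof. by case=> _ ha hm h1 [hs _]; split. Qed.

Theorem mainTheorem8
  (k : fieldType) (L : lmodType k) (brL : L -> L -> L) (hL : is_lie brL)
  (u v : L) (hgen : lie_generated brL u v)
  (rho : L -> heis k) (hrho : is_lie_hom brL rho)
  (hu : rho u = hx k) (hv : rho v = hy k)
  (UN : algType k) (iotaN : L -> UN)
  (hUN : is_env_alg brL (fun a => rho a = hzero k) iotaN)
  (eps : UN -> k) (heps : is_ahom (A := aops_of_alg UN) (B := kops k) eps)
  (heps0 : forall a, rho a = hzero k -> eps (iotaN a) = 0)
  (dw dv du : UN -> UN)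
  (hdw : is_der dw) (hdv : is_der dv) (hdu : is_der du)
  (hdw0 : forall a, rho a = hzero k -> dw (iotaN a) = iotaN (brL a (brL v u)))
  (hdv0 : forall a, rho a = hzero k -> dv (iotaN a) = iotaN (brL a v))
  (hdu0 : forall a, rho a = hzero k -> du (iotaN a) = iotaN (brL a u)) :
  let w := brL v u in
  (* U(N)((t_w; d_w)) with the extensions of d_v, d_u *)
  let R1 := laurent (A := aops_of_alg UN) dw in
  let dv1 : R1 -> R1 := ext_der (A := aops_of_alg UN) dw dv (iotaN (brL w v)) in
  let du1 : R1 -> R1 := ext_der (A := aops_of_alg UN) dw du (iotaN (brL w u)) in
  (* U(N)((t_w; d_w))((t_v; d_v)) with the extension of d_u, d_u(t_v) = -t_v w t_v *)
  let R2 := laurent dv1 in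
  let du2 : R2 -> R2 := ext_der dv1 du1 (tpow (A := aops_of_alg UN) dw (-1)) in
  let R3 := laurent du2 in
  (* k((t_z)), k((t_z))((t_y)), k((t_z))((t_y))((t_x; d_x)) *)
  let K1 := laurent (zero_der (kops k)) in
  let K2 := laurent (zero_der K1) in
  let dx1 : K1 -> K1 := ext_der (zero_der (kops k)) (zero_der (kops k)) 0 in
  let dx : K2 -> K2 := ext_der (zero_der K1) dx1 (tpow (A := kops k) (zero_der (kops k)) (-1)) in
  let K3 := laurent dx in
  exists Phw : R1 -> K1,
    [/\ is_ahom Phw,
        (forall (f : R1) (n : int), coef (Phw f) n = eps (coef f n)) &
    exists Phv : R2 -> K2,
    [/\ is_ahom Phv,
        (forall (g : R2) (n : int), coef (Phv g) n = Phw (coef g n)) &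
    exists Phu : R3 -> K3,
      is_ahom Phu /\
      (forall (h : R3) (n : int), coef (Phu h) n = Phv (coef h n))]].
Proof.
move=> w R1 dv1 du1 R2 du2 R3 K1 K2 dx1 dx K3.
have gk := good_kops k.
have hee := homp_eps heps.
case: hrho => hrl hrb.
have br0 : forall a b, rho a = hzero k -> rho (brL a b) = hzero k.
  move=> a b ha; rewrite hrb ha /hbr /hzero /=.
  by rewrite !mul0r subrr.
have br2 : forall a b c, rho (brL (brL a b) c) = hzero k.
  move=> a b c; rewrite hrb hrb /hbr /hzero /=.
  by rewrite !mul0r subrr.
have epsdw : forall x, eps (dw x) = 0.
  apply: (eps_der_zero hUN heps hdw) => a ha.
  by rewrite hdw0 // heps0 // br0.
have epsdv : forall x, eps (dv x) = 0.
  apply: (eps_der_zero hUN heps hdv) => a ha.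
  by rewrite hdv0 // heps0 // br0.
have epsdu : forall x, eps (du x) = 0.
  apply: (eps_der_zero hUN heps hdu) => a ha.
  by rewrite hdu0 // heps0 // br0.
have hd1 : forall a, eps (dw a) = zero_der (kops k) (eps a) := epsdw.
pose Phw : R1 -> K1 := map_ser (A := aops_of_alg UN) (B := kops k) eps.
have hPhw : homp Phw :=
  @map_hom _ (aops_of_alg UN) (kops k) eps gk dw (zero_der (kops k)) erefl hee hd1.
have gK1 : good K1 := @goodL _ _ gk (zero_der (kops k)) erefl.
have ecv : eps (iotaN (brL w v)) = 0 by rewrite heps0 // br2.
have ecu : eps (iotaN (brL w u)) = 0 by rewrite heps0 // br2.
have hd2 : forall a, Phw (dv1 a) = zero_der K1 (Phw a).
  move=> a.
  rewrite /Phw /dv1 (@map_ext_der _ (aops_of_alg UN) (kops k) eps gk dw (zero_der (kops k))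
     erefl hee hd1 dv (zero_der (kops k)) erefl epsdv) ecv.
  exact: (@ext_der_triv _ _ gk _ erefl).
exists Phw; split; first exact: ahom_of_homp.
  by move=> f n; apply: coef_map; case: hee.
pose Phv : R2 -> K2 := map_ser Phw.
have hPhv : homp Phv :=
  @map_hom _ R1 K1 Phw gK1 dv1 (zero_der K1) erefl hPhw hd2.
have gK2 : good K2 := @goodL _ _ gK1 (zero_der K1) erefl.
have dx10 : dx1 (a0 K1) = a0 K1.
  exact: (@ext_der_zero _ _ gk _ erefl).
have dx0 : dx (a0 K2) = a0 K2.
  exact: (@ext_der_zero _ _ gK1 _ erefl).
have hdu1 : forall a, Phw (du1 a) = dx1 (Phw a).
  move=> a.
  by rewrite /Phw /du1 (@map_ext_der _ (aops_of_alg UN) (kops k) eps gk dw (zero_der (kops k))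
     erefl hee hd1 du (zero_der (kops k)) erefl epsdu) ecu.
have hd3 : forall g, Phv (du2 g) = dx (Phv g).
  move=> g.
  rewrite /Phv /du2 (@map_ext_der _ R1 K1 Phw gK1 dv1 (zero_der K1) erefl hPhw hd2
     du1 dx1 dx10 hdu1).
  by rewrite /Phw (@map_tpow _ (aops_of_alg UN) (kops k) eps dw (zero_der (kops k)) hee).
exists Phv; split; first exact: ahom_of_homp.
  by move=> f n; apply: coef_map; case: hPhw.
pose Phu : R3 -> K3 := map_ser Phv.
have hPhu : homp Phu := @map_hom _ R2 K2 Phv gK2 du2 dx dx0 hPhv hd3.
exists Phu; split; first exact: ahom_of_homp.
by move=> f n; apply: coef_map; case: hPhv.
Qed.
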